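(* Let $\Gamma=\mathbb{Z}/2\times\mathbb{Z}$, let $S$ be a finite symmetric multiset of elements of $\Gamma$ not containing the identity and generating $\Gamma$, and let $a:\Gamma\curvearrowright X$ be a free Borel action on a standard Borel space $X$. If $(1,0)\in S$, then $\chi_B'(G(a,S))=|S|$.
   Context: $G(a,S)$ is the multigraph on $X$ with, for each $x$ and each occurrence of $\gamma$ in $S$, an edge between $x$ and $\gamma\cdot x$ (the occurrence of $\gamma$ at $x$ and the corresponding occurrence of $\gamma^{-1}$ at $\gamma\cdot x$ giving the same edge, so each vertex has degree $|S|$). $\chi_B'$ is the least number of colors in a Borel edge coloring, where distinct edges sharing a vertex receive distinct colors. *)

(* Defs.v *)
From HB Require Import structures.
From mathcomp Require Import all_boot all_order all_algebra.
From mathcomp Require Import all_classical all_reals all_analysis.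
From mathcomp Require Import Rstruct Rstruct_topology.
Set Implicit Arguments. Unset Strict Implicit. Unset Printing Implicit Defensive.
Import Order.TTheory GRing.Theory Num.Theory.
Local Open Scope classical_set_scope.
Local Open Scope ring_scope.

Definition Gamma : zmodType := ('Z_2 * int)%type.

Definition borel (T : topologicalType) : set (set T) := <<s @open T >>.

Definition borel_fun (T U : topologicalType) (f : T -> U) : Prop :=
  forall B : set U, borel B -> borel (f @^-1` B).

Definition polish (T : topologicalType) : Prop :=
  (exists D : set T, countable D /\ closure D = setT) /\
  exists d : T -> T -> Rdefinitions.R,
    [/\ (forall x y, 0 <= d x y) /\
        (forall x y, d x y = 0 <-> x = y),
        (forall x y, d x y = d y x),
        (forall x y z, d x z <= d x y + d y z),
        (forall A : set T, open A <->
            forall x, A x -> exists e : Rdefinitions.R, 0 < e /\ [set y | d x y < e] `<=` A) &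
        (forall u : nat -> T,
           (forall e : Rdefinitions.R, 0 < e -> exists N : nat, forall m n : nat,
               (N <= m)%N -> (N <= n)%N -> d (u m) (u n) < e) ->
           exists l : T, forall e : Rdefinitions.R, 0 < e ->
             exists N : nat, forall n : nat, (N <= n)%N -> d (u n) l < e)].

(* A standard Borel space is taken to be a Polish space equipped with its
   Borel sigma-algebra. *)
Definition standard_borel (X : topologicalType) : Prop := polish X.

Definition borel_action (X : topologicalType) (a : Gamma -> X -> X) : Prop :=
  [/\ (forall x, a 0 x = x),
      (forall g h x, a (g + h) x = a g (a h x)) &
      (forall g, borel_fun (a g))].

Definition free_action (X : Type) (a : Gamma -> X -> X) : Prop :=
  forall g x, a g x = x -> g = 0.

Definition symmetric_mset (S : seq Gamma) : Prop :=
  forall g : Gamma, count_mem g S = count_mem (- g) S.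

(* S generates Gamma as a group (Gamma is abelian: integer combinations). *)
Definition generates (S : seq Gamma) : Prop :=
  forall g : Gamma, exists k : nat -> int,
    g = \sum_(i < size S) (S`_i *~ k i).

Definition occ (S : seq Gamma) (i : nat) : nat := count_mem S`_i (take i S).

Definition kth_occ (S : seq Gamma) (y : Gamma) (k : nat) : nat :=
  find (fun j => (S`_j == y) && (count_mem y (take j S) == k)) (iota 0 (size S)).

(* The corresponding occurrence of the inverse: the occurrence of gamma with
   index i corresponds to the occurrence of gamma^{-1} with the same rank. *)
Definition partner (S : seq Gamma) (i : nat) : nat := kth_occ S (- S`_i) (occ S i).

(* The multigraph G(a,S): its edges are the half-edges (x, i), i < |S|,
   modulo the identification of (x, i) with (S_i . x, partner S i).
   An edge coloring with k colors is therefore a function c on half-edges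
   which is constant on identified pairs; it is proper iff distinct
   half-edges at the same vertex get distinct colors (no loops occur for a
   free action since 0 \notin S); it is Borel iff each x |-> c x i is Borel
   (the set of colors being discrete). *)
Definition borel_edge_coloring (X : topologicalType) (a : Gamma -> X -> X)
    (S : seq Gamma) (k : nat) (c : X -> nat -> nat) : Prop :=
  [/\ (forall x i, (i < size S)%N -> (c x i < k)%N),
      (forall x i, (i < size S)%N -> c (a S`_i x) (partner S i) = c x i),
      (forall x i j, (i < size S)%N -> (j < size S)%N -> i <> j -> c x i <> c x j) &
      (forall i m, (i < size S)%N -> borel [set x | c x i = m])].

Definition borel_edge_colorable (X : topologicalType) (a : Gamma -> X -> X)
    (S : seq Gamma) (k : nat) : Prop :=
  exists c : X -> nat -> nat, borel_edge_coloring a S k c.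

Definition borel_chromatic_index_eq (X : topologicalType) (a : Gamma -> X -> X)
    (S : seq Gamma) (k : nat) : Prop :=
  borel_edge_colorable a S k /\
  forall k', borel_edge_colorable a S k' -> (k <= k')%N.

(* Main.v *)
Set Warnings "-notation-overridden,-ambiguous-paths,-notation-incompatible-prefix,-deprecated".
Require Import Defs.
From HB Require Import structures.
From mathcomp Require Import all_boot all_order all_algebra.
From mathcomp Require Import all_classical all_reals all_analysis.
From mathcomp Require Import Rstruct Rstruct_topology.
From mathcomp Require Import zify ring lra.
Import Order.TTheory GRing.Theory Num.Theory.
Local Open Scope ring_scope.
Local Open Scope classical_set_scope.
Lemma find_iota_exact (P : pred nat) n i :
  (i < n)%N -> P i -> (forall j, (j < i)%N -> ~~ P j) -> find P (iota 0 n) = i.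
Proof.
move=> lin Pi bef.
have hasP : has P (iota 0 n) by apply/hasP; exists i => //; rewrite mem_iota.
have jlt : (find P (iota 0 n) < n)%N by rewrite -[X in (_ < X)%N](size_iota 0 n) -has_find.
have := nth_find 0 hasP; rewrite nth_iota // add0n => Pj.
case: (ltngtP (find P (iota 0 n)) i) => // [/bef|]; first by rewrite Pj.
move=> /(before_find 0); rewrite nth_iota // add0n Pi //.
Qed.

Lemma count_take_mono (T : eqType) (y : T) (s : seq T) j i :
  (j <= i)%N -> (count_mem y (take j s) <= count_mem y (take i s))%N.
Proof.
move=> ji; rewrite -(cat_take_drop j (take i s)) take_takel // count_cat.
exact: leq_addr.
Qed.

Lemma kth_exists (T : eqType) (x0 : T) (y : T) (s : seq T) k :
  (k < count_mem y s)%N ->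
  exists j, [/\ (j < size s)%N, nth x0 s j = y & count_mem y (take j s) = k].
Proof.
elim: s k => [|a s IH] k //=.
case: (eqVneq a y) => [->|ay] /=.
  case: k => [|k] H; first by exists 0%N; rewrite take0.
  have /IH [j [js nj cj]] : (k < count_mem y s)%N by move: H => /=; lia.
  by exists j.+1; split => //=; rewrite eqxx cj.
move=> /= H; have /IH [j [js nj cj]] : (k < count_mem y s)%N by move: H => /=; lia.
by exists j.+1; split => //=; rewrite (negbTE ay) cj.
Qed.

Section Occ.
Set Implicit Arguments. Unset Strict Implicit.
Variable S : seq Gamma.

Lemma kth_occ_spec y k : (k < count_mem y S)%N ->
  [/\ (kth_occ S y k < size S)%N, S`_(kth_occ S y k) = y &
      occ S (kth_occ S y k) = k].
Proof.
move=> /(@kth_exists _ 0) [j [js nj cj]].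
set P := (fun j => (S`_j == y) && (count_mem y (take j S) == k)).
have hasP : has P (iota 0 (size S)).
  by apply/hasP; exists j; [rewrite mem_iota | rewrite /P nj cj !eqxx].
have jlt : (kth_occ S y k < size S)%N.
  by rewrite /kth_occ -[X in (_ < X)%N](size_iota 0 (size S)) -has_find.
have := nth_find 0 hasP; rewrite nth_iota // add0n => /andP [/eqP e /eqP c].
by split => //; rewrite /occ e.
Qed.

Lemma kth_occ_self i : (i < size S)%N -> kth_occ S S`_i (occ S i) = i.
Proof.
move=> iS; rewrite /kth_occ; apply: find_iota_exact => //.
  by rewrite /occ !eqxx.
move=> j ji; apply/negP => /andP [/eqP e /eqP c].
have := @count_take_mono _ S`_i S j.+1 i ji.
rewrite (take_nth 0) ?(ltn_trans ji) // -cats1 count_cat c /occ e /= eqxx.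
by rewrite addn1 ltnn.
Qed.

Hypothesis symS : symmetric_mset S.

Lemma occ_lt i : (i < size S)%N -> (occ S i < count_mem (S`_i)%R S)%N.
Proof.
move=> iS; rewrite /occ.
set y := S`_i.
have -> : count_mem y S = count_mem y (take i S ++ drop i S) by rewrite cat_take_drop.
rewrite count_cat (drop_nth 0) //= /y.
rewrite eqxx; lia.
Qed.

Lemma partner_spec i : (i < size S)%N ->
  [/\ (partner S i < size S)%N, S`_(partner S i) = - S`_i &
      occ S (partner S i) = occ S i].
Proof.
move=> iS; apply: kth_occ_spec; rewrite -symS; exact: occ_lt.
Qed.

Lemma partner_lt i : (i < size S)%N -> (partner S i < size S)%N.
Proof. by case/partner_spec. Qed.
Lemma partner_val i : (i < size S)%N -> S`_(partner S i) = - S`_i.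
Proof. by case/partner_spec. Qed.

Lemma partnerK i : (i < size S)%N -> partner S (partner S i) = i.
Proof.
move=> iS; case: (partner_spec iS) => pl pv po.
by rewrite /partner pv opprK po kth_occ_self.
Qed.

End Occ.
Definition tt0 : Gamma := ((1 : 'Z_2)%R, (0 : int)).

Lemma opp_tt0 : - tt0 = tt0.
Proof. by apply/eqP. Qed.

Lemma Z2_cases (x : 'Z_2) : x = 0 \/ x = 1.
Proof. by case: x => [[|[|n]] H] //=; [left|right]; apply/val_inj. Qed.

Lemma gamma_lvl0 (g : Gamma) : g != 0 -> g.2 = 0 -> g = tt0.
Proof.
case: g => a b /= nz b0; subst b.
by case: (Z2_cases a) => ea; subst a.
Qed.
Definition shiftf (d : int) (f : int -> bool) : int -> bool := fun z => f (z + d).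

Lemma shiftf0 f : shiftf 0 f = f.
Proof. by apply: funext => z; rewrite /shiftf addr0. Qed.

Lemma shiftfA a b f : shiftf a (shiftf b f) = shiftf (a + b) f.
Proof. by apply: funext => z; rewrite /shiftf addrA. Qed.

Section Comb.
Set Implicit Arguments. Unset Strict Implicit.
Variable S : seq Gamma.
Hypothesis symS : symmetric_mset S.
Hypothesis S0 : (0 : Gamma) \notin S.
Hypothesis tS : tt0 \in S.
Implicit Types (f : int -> bool).

Definition lvl i : int := (S`_i).2.
Definition nn i : nat := absz (lvl i).
Definition PP : nat := (\sum_(i < size S) nn i).+1.
Definition WW : nat := (2 * PP * size S)%N.
Definition oo p : nat := (2 * PP * p)%N.
Definition KK : nat := (2 * WW + 2)%N.
Definition i0 : nat := index tt0 S.

Definition Dp p (f : int -> bool) (z : int) : bool :=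
  has (fun s : nat => f (z - (oo p + s)%N%:Z)) (iota 0 (nn p)).
Definition kk p f : nat :=
  find (fun k : nat => Dp p f (- (k.+1 * nn p)%N%:Z)) (iota 0 KK).
Definition colp p f : nat :=
  if Dp p f 0 then i0 else if odd (kk p f) then partner S p else p.
Definition other p c : nat := if c == p then partner S p else p.
Definition rung f : nat :=
  let E := find (fun s : nat => f (- s%:Z)) (iota 0 WW) in
  let p := (E %/ (2 * PP))%N in let r := (E %% (2 * PP))%N in
  if [&& (E < WW)%N, 0 < lvl p & (r < 2 * nn p)%N] then
    other p (if (r < nn p)%N then colp p (shiftf (- (nn p)%:Z) f) else colp p f)
  else i0.
Definition Col i f : nat :=
  if S`_i == tt0 then (if i == i0 then rung f else i)
  else if 0 < lvl i then colp i f else colp (partner S i) (shiftf (lvl i) f).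

Lemma i0_lt : (i0 < size S)%N.
Proof. by rewrite /i0 index_mem. Qed.

Lemma i0_val : S`_i0 = tt0.
Proof. by rewrite /i0 nth_index. Qed.

Lemma nn_lt p : (p < size S)%N -> (nn p < PP)%N.
Proof.
move=> pS; rewrite /PP ltnS (bigD1 (Ordinal pS)) //=; exact: leq_addr.
Qed.

Lemma PP_gt0 : (0 < PP)%N. Proof. by []. Qed.

Lemma size_gt0 : (0 < size S)%N.
Proof. by case: S tS. Qed.

Lemma lvl_nt i : (i < size S)%N -> S`_i != tt0 -> lvl i != 0.
Proof.
move=> iS nt; apply/negP => /eqP l0; move/negP: nt; apply.
apply/eqP; apply: gamma_lvl0 => //.
by apply/negP => /eqP e; move: S0; rewrite -e mem_nth.
Qed.

Lemma lvl_partner i : (i < size S)%N -> lvl (partner S i) = - lvl i.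
Proof. by move=> iS; rewrite /lvl partner_val. Qed.

Lemma nn_partner i : (i < size S)%N -> nn (partner S i) = nn i.
Proof. by move=> iS; rewrite /nn lvl_partner // abszN. Qed.

Lemma partner_nt i : (i < size S)%N -> S`_i != tt0 -> S`_(partner S i) != tt0.
Proof.
move=> iS nt; rewrite partner_val //; apply: contra nt => /eqP e.
by rewrite -opp_tt0 -e opprK.
Qed.

Lemma partner_t i : (i < size S)%N -> S`_i = tt0 -> partner S i = i.
Proof.
by move=> iS e; rewrite /partner e opp_tt0 -e kth_occ_self.
Qed.

Lemma partner_neq i : (i < size S)%N -> S`_i != tt0 -> partner S i != i.
Proof.
move=> iS nt; apply/eqP => e; have := lvl_partner iS; rewrite e => h.
have := lvl_nt iS nt; move: h; set x := lvl i; move=> h; have -> : x = 0 by lia.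
by [].
Qed.

Definition sparse (f : int -> bool) :=
  forall a b, f a -> f b -> `|a - b| <= (WW%:Z) -> a = b.
Definition dense (f : int -> bool) :=
  forall z, exists w, `|z - w| <= (WW%:Z) /\ f w.

Lemma sparse_shift d f : sparse f -> sparse (shiftf d f).
Proof.
move=> sp a b fa fb h; have := sp _ _ fa fb.
rewrite opprD addrACA subrr addr0 => /(_ h) e.
by apply: (addIr d).
Qed.

Lemma dense_shift d f : dense f -> dense (shiftf d f).
Proof.
move=> dn z; have [w [h fw]] := dn (z + d); exists (w - d); split.
  by move: h; rewrite opprB addrA addrAC.
by rewrite /shiftf subrK.
Qed.

Definition ev (p : nat) (b : bool) (f : int -> bool) : bool :=
  has (fun s : nat => f (- (oo p + nat_of_bool b * nn p + s)%N%:Z)) (iota 0 (nn p)).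

Lemma Dp_shift p d f z : Dp p (shiftf d f) z = Dp p f (z + d).
Proof. by apply: eq_has => s /=; rewrite /shiftf addrAC. Qed.

Lemma Dp_left p f : Dp p f 0 = ev p false f.
Proof. by apply: eq_has => s /=; rewrite sub0r mul0n addn0. Qed.

Lemma Dp_right p f : Dp p f (- (nn p)%:Z) = ev p true f.
Proof. by apply: eq_has => s /=; rewrite mul1n; congr f; lia. Qed.

Lemma evP p b f :
  reflect (exists2 s, (s < nn p)%N & f (- (oo p + nat_of_bool b * nn p + s)%N%:Z)) (ev p b f).
Proof.
apply: (iffP hasP) => [[s] | [s sl fs]].
  by rewrite mem_iota add0n => /andP [_ sl] fs; exists s.
by exists s => //; rewrite mem_iota add0n sl.
Qed.

Lemma uniq_marker f (sp : sparse f) s1 s2 :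
  (s1 < WW)%N -> (s2 < WW)%N -> f (- s1%:Z) -> f (- s2%:Z) -> s1 = s2.
Proof.
move=> l1 l2 f1 f2; have := sp _ _ f1 f2.
have h : `|- s1%:Z - - s2%:Z| <= WW%:Z.
  rewrite ler_norml; apply/andP; split; lia.
by move=> /(_ h) e; lia.
Qed.

Lemma ev_offset_lt p (b : bool) : (p < size S)%N -> (oo p + nat_of_bool b * nn p + nn p <= oo p.+1)%N.
Proof.
move=> pS; have := nn_lt pS; rewrite /oo; case: b => /=; lia.
Qed.

Lemma oo_le p : (p < size S)%N -> (oo p.+1 <= WW)%N.
Proof. move=> pS; rewrite /oo /WW; apply: leq_mul => //. Qed.

Lemma div_decomp a b r r' m : (0 < m)%N -> (r < m)%N -> (r' < m)%N ->
  (m * a + r = m * b + r')%N -> a = b /\ r = r'.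
Proof.
move=> m0 rm rm' e.
have ha : ((m * a + r) %/ m = a)%N by rewrite mulnC divnMDl // divn_small // addn0.
have hb : ((m * b + r') %/ m = b)%N by rewrite mulnC divnMDl // divn_small // addn0.
have ab : a = b by rewrite -ha e hb.
by split => //; subst b; lia.
Qed.

Lemma ev_unique f (sp : sparse f) p p' (b b' : bool) :
  (p < size S)%N -> (p' < size S)%N -> ev p b f -> ev p' b' f -> p = p' /\ b = b'.
Proof.
move=> pS pS' /evP [s sl fs] /evP [s' sl' fs'].
have l1 := ev_offset_lt b pS; have l2 := ev_offset_lt b' pS'.
have w1 := oo_le pS; have w2 := oo_le pS'.
have e := uniq_marker sp (_ : _ < WW)%N (_ : _ < WW)%N fs fs'.
have {}e : (oo p + b * nn p + s = oo p' + b' * nn p' + s')%N by apply: e; lia.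
have np := nn_lt pS; have np' := nn_lt pS'.
have [pp rr] : p = p' /\ (b * nn p + s = b' * nn p' + s')%N.
  have bb : (b * nn p <= nn p)%N by case: (b); rewrite ?mul1n ?mul0n.
  have bb' : (b' * nn p' <= nn p')%N by case: (b'); rewrite ?mul1n ?mul0n.
  apply: (@div_decomp _ _ _ _ (2 * PP)) => //; try lia.
  by move: e; rewrite /oo; lia.
rewrite -pp in rr sl' *; split => //; move: rr sl sl'; case: (b); case: (b'); rewrite ?mul1n ?mul0n => // *; exfalso; lia.
Qed.

Lemma pos_nt p : 0 < lvl p -> S`_p != tt0.
Proof. by move=> lp; apply/eqP => e; move: lp; rewrite /lvl e. Qed.

Lemma pos_lt p : (p < size S)%N -> 0 < lvl p -> (0 < nn p)%N.
Proof. by move=> _ lp; rewrite /nn absz_gt0; lia. Qed.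

Lemma lvl_pos_nn p : 0 < lvl p -> lvl p = (nn p)%:Z.
Proof. by move=> lp; rewrite /nn gez0_abs // ltW. Qed.

Lemma partner_pos_nt p : (p < size S)%N -> 0 < lvl p -> S`_(partner S p) != tt0.
Proof. by move=> pS lp; apply: partner_nt => //; exact: pos_nt. Qed.

Lemma i0_neq_nt k : S`_k != tt0 -> k != i0.
Proof. by apply: contra => /eqP ->; rewrite i0_val. Qed.

Lemma partner_pos_neq p : (p < size S)%N -> 0 < lvl p -> partner S p != p.
Proof. by move=> pS lp; apply: partner_neq => //; exact: pos_nt. Qed.

Definition wrung f := find (fun s : nat => f (- s%:Z)) (iota 0 WW).

Lemma rung_ev f (sp : sparse f) p (b : bool) :
  (p < size S)%N -> 0 < lvl p -> ev p b f ->
  rung f = other p (if b then colp p f else colp p (shiftf (- (nn p)%:Z) f)).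
Proof.
move=> pS lp /evP [s sl fs].
have l1 := ev_offset_lt b pS; have w1 := oo_le pS; have np := nn_lt pS.
have bb : (b * nn p <= nn p)%N by case: (b); rewrite ?mul1n ?mul0n.
have eW : (oo p + b * nn p + s < WW)%N by lia.
have E : wrung f = (oo p + b * nn p + s)%N.
  apply: find_iota_exact => // j je; apply/negP => fj.
  have := uniq_marker sp (_ : j < WW)%N eW fj fs; lia.
have r_lt : (b * nn p + s < 2 * PP)%N by lia.
have Ed : ((oo p + b * nn p + s) %/ (2 * PP) = p)%N.
  by rewrite /oo -addnA mulnC divnMDl // divn_small // addn0.
have Em : ((oo p + b * nn p + s) %% (2 * PP) = b * nn p + s)%N.
  by rewrite /oo -addnA mulnC modnMDl modn_small.
rewrite /rung -/(wrung f) E Ed Em eW lp /=.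
have -> : (b * nn p + s < 2 * nn p)%N by case: (b) sl; rewrite ?mul1n ?mul0n; lia.
by case: (b) sl => /= sl; rewrite ?mul1n ?mul0n; [rewrite ltnNge leq_addr | rewrite add0n sl].
Qed.

Lemma rung_cases f :
  rung f = i0 \/ exists p (b : bool), [/\ (p < size S)%N, 0 < lvl p & ev p b f].
Proof.
rewrite /rung -/(wrung f); set E := wrung f.
case: ifP => [/and3P [EW lp rl] | _]; last by left.
right; set p := (E %/ (2 * PP))%N; set r := (E %% (2 * PP))%N.
move: lp rl; rewrite -/p -/r => lp rl.
have pS : (p < size S)%N by rewrite /p ltn_divLR // mulnC.
exists p, (nn p <= r)%N; split => //.
have fE : f (- E%:Z).
  have hs : has (fun s : nat => f (- s%:Z)) (iota 0 WW) by rewrite has_find size_iota.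
  by have := nth_find 0 hs; rewrite -/(wrung f) -/E nth_iota // add0n.
apply/evP; exists (r - (nn p <= r) * nn p)%N.
  by case: (leqP (nn p) r) => /= h; rewrite ?mul1n ?mul0n; lia.
have ED := divn_eq E (2 * PP); rewrite -/p -/r in ED.
suff -> : (oo p + (nn p <= r) * nn p + (r - (nn p <= r) * nn p))%N = E by [].
rewrite /oo; case: (leqP (nn p) r) => /= h; rewrite ?mul1n ?mul0n; lia.
Qed.

Lemma other_neq p c : (p < size S)%N -> 0 < lvl p ->
  (c = p \/ c = partner S p) -> other p c != c.
Proof.
move=> pS lp; rewrite /other => -[->|->]; rewrite ?eqxx.
  exact: partner_pos_neq.
by rewrite eq_sym (negbTE (partner_pos_neq pS lp)) partner_pos_neq.
Qed.

Lemma other_in p c : other p c = p \/ other p c = partner S p.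
Proof. by rewrite /other; case: ifP; [right|left]. Qed.

Lemma kk_exists g (dn : dense g) p : (p < size S)%N -> 0 < lvl p ->
  has (fun k : nat => Dp p g (- (k.+1 * nn p)%N%:Z)) (iota 0 KK.-1).
Proof.
move=> pS lp; have n0 := pos_lt pS lp.
have [w [h gw]] := dn (- (nn p + oo p + WW)%N%:Z).
move: h; rewrite ler_norml => /andP [h1 h2].
have [e ew] : exists e : nat, w = - e%:Z by exists (absz w); lia.
subst w.
set q := ((e - oo p) %/ nn p)%N; set r := ((e - oo p) %% nn p)%N.
have ED := divn_eq (e - oo p) (nn p); rewrite -/q -/r in ED.
have rl : (r < nn p)%N by rewrite /r ltn_pmod.
have q0 : (0 < q)%N.
  rewrite lt0n; apply/negP => /eqP q0; rewrite q0 mul0n add0n in ED; lia.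
have q1 : (q.-1 <= q.-1 * nn p)%N by rewrite leq_pmulr.
have q2 : (q.-1 * nn p = q * nn p - nn p)%N by rewrite -subn1 mulnBl mul1n.
apply/hasP; exists q.-1.
  rewrite mem_iota add0n /KK; lia.
apply/hasP; exists r; first by rewrite mem_iota add0n.
rewrite prednK //.
match goal with |- is_true (g ?X) => have -> : X = - e%:Z by lia end.
exact: gw.
Qed.

Lemma kk_shift f (dn : dense f) p : (p < size S)%N -> 0 < lvl p ->
  ~~ Dp p f (- (nn p)%:Z) ->
  kk p f = (kk p (shiftf (- (nn p)%:Z) f)).+1.
Proof.
move=> pS lp nD; set g := shiftf _ f.
have hg := kk_exists (dense_shift (- (nn p)%:Z) dn) pS lp; rewrite -/g in hg.
have KKe : KK = (2 * WW + 1).+1 by rewrite /KK addnS.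
rewrite KKe /= in hg; rewrite /kk KKe.
set m := (2 * WW + 1)%N.
set Pf := (fun k : nat => Dp p f (- (k.+1 * nn p)%N%:Z)).
set Pg := (fun k : nat => Dp p g (- (k.+1 * nn p)%N%:Z)).
have R : find Pg (iota 0 m.+1) = find Pg (iota 0 m).
  by rewrite -addn1 iotaD find_cat hg.
have L : find Pf (iota 0 m.+1) = (find Pg (iota 0 m)).+1.
  rewrite /= {1}/Pf.
  have -> : Dp p f (- (1 * nn p)%N%:Z) = false by rewrite mul1n; exact/negbTE.
  congr (_.+1); rewrite -[1%N]addn0 iotaDl find_map; apply: eq_find => k /=.
  by rewrite /Pf /Pg Dp_shift; congr Dp; lia.
by rewrite L R.
Qed.
Lemma colp_LR f (sp : sparse f) (dn : dense f) p : (p < size S)%N -> 0 < lvl p ->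
  colp p f != colp p (shiftf (- (nn p)%:Z) f).
Proof.
move=> pS lp; set g := shiftf _ f.
have Dg : Dp p g 0 = Dp p f (- (nn p)%:Z) by rewrite Dp_shift add0r.
have excl : Dp p f 0 -> ~~ Dp p f (- (nn p)%:Z).
  rewrite Dp_left Dp_right => a; apply/negP => b.
  by have [_] := ev_unique sp pS pS a b.
have ni0p : p != i0 := i0_neq_nt (pos_nt lp).
have ni0q : partner S p != i0 := i0_neq_nt (partner_pos_nt pS lp).
have pq := partner_pos_neq pS lp.
rewrite /colp Dg; case: (boolP (Dp p f 0)) => L.
  by rewrite (negbTE (excl L)); case: ifP; rewrite eq_sym.
case: (boolP (Dp p f (- (nn p)%:Z))) => Rr.
  by case: ifP.
rewrite (kk_shift dn pS lp Rr) -/g /=.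
by case: (odd (kk p g)) => /=; rewrite // eq_sym.
Qed.

Definition ce p (b : bool) f := if b then colp p (shiftf (- (nn p)%:Z) f) else colp p f.
Definition idx p (b : bool) := if b then partner S p else p.

Lemma Col_idx f p b : (p < size S)%N -> 0 < lvl p -> Col (idx p b) f = ce p b f.
Proof.
move=> pS lp; rewrite /Col /idx /ce; case: b.
  rewrite (negbTE (partner_pos_nt pS lp)) lvl_partner // oppr_gt0 ltNge (ltW lp) /=.
  by rewrite partnerK // lvl_pos_nn.
by rewrite (negbTE (pos_nt lp)) lp.
Qed.

Lemma idx_surj i : (i < size S)%N -> S`_i != tt0 ->
  exists p b, [/\ (p < size S)%N, 0 < lvl p & i = idx p b].
Proof.
move=> iS nt; have l0 := lvl_nt iS nt.
case: (ltP 0 (lvl i)) => li.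
  by exists i, false.
exists (partner S i), true; split; first exact: partner_lt.
  by rewrite lvl_partner // oppr_gt0 lt_neqAle l0.
by rewrite /idx partnerK.
Qed.

Lemma ce_i0 f p b : (p < size S)%N -> 0 < lvl p -> (ce p b f == i0) = ev p b f.
Proof.
move=> pS lp.
have ni0p : p != i0 := i0_neq_nt (pos_nt lp).
have ni0q : partner S p != i0 := i0_neq_nt (partner_pos_nt pS lp).
have H : forall g, (colp p g == i0) = Dp p g 0.
  by move=> g; rewrite /colp; case: (Dp p g 0); rewrite ?eqxx //; case: ifP => _; apply/negbTE.
rewrite /ce; case: b; rewrite H.
  by rewrite Dp_shift add0r Dp_right.
by rewrite Dp_left.
Qed.

Lemma ce_in f p b : [\/ ce p b f = i0, ce p b f = p | ce p b f = partner S p].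
Proof.
by rewrite /ce /colp; case: b; case: ifP => _; try (by constructor 1);
  case: ifP => _; [constructor 3 | constructor 2 | constructor 3 | constructor 2].
Qed.

Lemma rung_ev2 f (sp : sparse f) p (b : bool) :
  (p < size S)%N -> 0 < lvl p -> ev p b f -> rung f = other p (ce p (~~ b) f).
Proof. by move=> pS lp e; rewrite (rung_ev sp pS lp e) /ce; case: (b). Qed.

Lemma pair_same p p' c : (p < size S)%N -> 0 < lvl p -> (p' < size S)%N -> 0 < lvl p' ->
  (c = p \/ c = partner S p) -> (c = p' \/ c = partner S p') -> p = p'.
Proof.
move=> pS lp pS' lp'.
have n1 : lvl (partner S p) < 0 by rewrite lvl_partner // oppr_lt0.
have n2 : lvl (partner S p') < 0 by rewrite lvl_partner // oppr_lt0.
case=> ->; case=> // e.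
- by move: lp; rewrite e => h; move: (lt_trans h n2); rewrite ltxx.
- by move: lp'; rewrite -e => h; move: (lt_trans h n1); rewrite ltxx.
- by rewrite -(partnerK symS pS) e partnerK.
Qed.

Lemma t_not_pair p k : 0 < lvl p -> (p < size S)%N -> S`_k = tt0 -> k <> p /\ k <> partner S p.
Proof.
move=> lp pS e; split=> h; subst k.
  by move: (pos_nt lp); rewrite e eqxx.
by move: (partner_pos_nt pS lp); rewrite e eqxx.
Qed.

Lemma other_pair p c : other p c = p \/ other p c = partner S p.
Proof. exact: other_in. Qed.

Lemma rung_lt f : (rung f < size S)%N.
Proof.
rewrite /rung -/(wrung f); set E := wrung f.
case: ifP => [/and3P [EW lp rl] | _]; last exact: i0_lt.
have pS : (E %/ (2 * PP) < size S)%N by rewrite ltn_divLR // mulnC.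
set c := (if _ then _ else _).
by case: (other_in (E %/ (2 * PP))%N c) => ->; rewrite ?partner_lt.
Qed.

Lemma colp_lt p g : (p < size S)%N -> (colp p g < size S)%N.
Proof.
by move=> pS; rewrite /colp; case: ifP => _; [exact: i0_lt | case: ifP => _; rewrite ?partner_lt].
Qed.

Lemma Col_lt f i : (i < size S)%N -> (Col i f < size S)%N.
Proof.
move=> iS; rewrite /Col; case: ifP => _.
  by case: ifP => _; [exact: rung_lt | exact: iS].
case: ifP => _; first exact: colp_lt.
by apply: colp_lt; apply: partner_lt.
Qed.

Lemma Col_partner f i : (i < size S)%N ->
  Col (partner S i) (shiftf (lvl i) f) = Col i f.
Proof.
move=> iS; case: (eqVneq S`_i tt0) => et.
  have l0 : lvl i = 0 by rewrite /lvl et.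
  by rewrite partner_t // l0 shiftf0.
have [p [b [pS lp ->]]] := idx_surj iS et.
rewrite !Col_idx //.
have pb : partner S (idx p b) = idx p (~~ b) by rewrite /idx; case: b; rewrite ?partnerK.
rewrite pb Col_idx // /ce /idx; case: (b) => /=.
  by rewrite lvl_partner // lvl_pos_nn // shiftfA addNr shiftf0.
by rewrite lvl_pos_nn // shiftfA addNr shiftf0.
Qed.

Lemma Col_t_nt f (sp : sparse f) i j : (i < size S)%N -> (j < size S)%N ->
  S`_i = tt0 -> S`_j != tt0 -> Col i f != Col j f.
Proof.
move=> iS jS ti ntj; have [p [b [pS lp ej]]] := idx_surj jS ntj.
rewrite ej Col_idx // /Col ti eqxx.
have [tp tq] := t_not_pair lp pS ti.
have ni0p : p != i0 := i0_neq_nt (pos_nt lp).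
have ni0q : partner S p != i0 := i0_neq_nt (partner_pos_nt pS lp).
case: ifP => [/eqP ii0 | ii0].
- case: (boolP (ev p b f)) => E.
    rewrite (rung_ev2 sp pS lp E); move: E; rewrite -ce_i0 // => /eqP ->.
    by case: (other_in p (ce p (~~ b) f)) => ->.
  have cin : ce p b f = p \/ ce p b f = partner S p.
    by case: (ce_in f p b) => [/eqP|->|->]; [rewrite ce_i0 // (negbTE E)|left|right].
  case: (rung_cases f) => [->|[p' [b' [pS' lp' E']]]].
    by case: cin => ->; rewrite eq_sym.
  rewrite (rung_ev2 sp pS' lp' E').
  case: (eqVneq p p') => [pp|npp].
    subst p'; have bb : b' = ~~ b.
      by case: (b) E; case: (b') E' => //= e1 e2; rewrite e1 in e2.
    by rewrite bb negbK other_neq.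
  apply/eqP => e; move/eqP: npp; apply; apply: (@pair_same p p' (ce p b f) pS lp pS' lp') => //.
  by rewrite -e; exact: (other_in p').
- case: (ce_in f p b) => ->; apply/eqP => e.
  + by move: ii0; rewrite e eqxx.
  + by apply: tp.
  + by apply: tq.
Qed.
Lemma rung_ne_t f (sp : sparse f) j : S`_j = tt0 -> j != i0 -> rung f != j.
Proof.
move=> tj nj; case: (rung_cases f) => [->|[p [b [pS lp E]]]].
  by rewrite eq_sym.
rewrite (rung_ev2 sp pS lp E); have [tp tq] := t_not_pair lp pS tj.
by case: (other_in p (ce p (~~ b) f)) => ->; apply/eqP => e;
  [apply: tp | apply: tq]; rewrite e.
Qed.

Lemma Col_inj f (sp : sparse f) (dn : dense f) i j : (i < size S)%N -> (j < size S)%N ->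
  i != j -> Col i f != Col j f.
Proof.
move=> iS jS nij.
case: (eqVneq S`_i tt0) => ti; case: (eqVneq S`_j tt0) => tj.
- rewrite /Col ti tj !eqxx.
  case: (eqVneq i i0) => [ei|ni]; case: (eqVneq j i0) => [ej|nj].
  + by move: nij; rewrite ei ej eqxx.
  + exact: rung_ne_t.
  + by rewrite eq_sym; apply: rung_ne_t.
  + exact: nij.
- exact: Col_t_nt.
- by rewrite eq_sym; apply: Col_t_nt.
have [p [b [pS lp ei]]] := idx_surj iS ti.
have [p' [b' [pS' lp' ej]]] := idx_surj jS tj.
rewrite ei ej !Col_idx //.
case: (eqVneq p p') => [pp|npp].
  subst p'; have bb : b' = ~~ b.
    by move: nij; rewrite ei ej; case: (b); case: (b'); rewrite ?eqxx.
  rewrite bb /ce; case: (b) => /=; last exact: colp_LR.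
  by rewrite eq_sym; exact: colp_LR.
have ni0p : p != i0 := i0_neq_nt (pos_nt lp).
have ni0q : partner S p != i0 := i0_neq_nt (partner_pos_nt pS lp).
apply/eqP => e; move/eqP: npp; apply.
case: (ce_in f p b) => [c0|c1|c2].
- have E1 : ev p b f by rewrite -ce_i0 // c0.
  have E2 : ev p' b' f by rewrite -ce_i0 // -e c0.
  by case: (ev_unique sp pS pS' E1 E2).
- apply: (@pair_same p p' (ce p b f)) => //; first by left.
  by case: (ce_in f p' b') => h; rewrite -e in h; [move: ni0p; rewrite -c1 h eqxx | left | right].
- apply: (@pair_same p p' (ce p b f)) => //; first by right.
  by case: (ce_in f p' b') => h; rewrite -e in h; [move: ni0q; rewrite -c2 h eqxx | left | right].
Qed.
End Comb.
Section BorelClosure.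
Set Implicit Arguments. Unset Strict Implicit.
Variable X : topologicalType.
Implicit Types (A B : set X).

Lemma borel_ext B A : borel B -> (forall x, A x <-> B x) -> borel A.
Proof.
move=> bB h; move: bB; have -> // : A = B by apply/funext => x; apply/propext; exact: h.
Qed.

Lemma borel_open A : open A -> borel A.
Proof. by move=> oA; apply: sub_sigma_algebra. Qed.

Lemma borel0 : borel (@set0 X).
Proof. exact: sigma_algebra0. Qed.

Lemma borelC A : borel A -> borel (~` A).
Proof. by move=> bA; rewrite -setTD; apply: sigma_algebraCD. Qed.

Lemma borelT : borel (@setT X).
Proof. by rewrite -setC0; apply: borelC; exact: borel0. Qed.

Lemma borel_bigcup (F : nat -> set X) : (forall n, borel (F n)) -> borel (\bigcup_n F n).
Proof. exact: sigma_algebra_bigcup. Qed.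

Lemma borelU A B : borel A -> borel B -> borel (A `|` B).
Proof.
move=> bA bB; rewrite -bigcup2E; apply: borel_bigcup => -[|[|n]] //=; exact: borel0.
Qed.

Lemma borelI A B : borel A -> borel B -> borel (A `&` B).
Proof.
move=> bA bB; rewrite -[A `&` B]setCK setCI; apply: borelC; apply: borelU; exact: borelC.
Qed.

Definition bb (P : X -> bool) := borel [set x | P x].
Definition bm (h : X -> nat) := forall m, bb (fun x => h x == m).

Lemma bb_const c : bb (fun _ => c).
Proof.
case: c; [apply: (borel_ext borelT) | apply: (borel_ext borel0)] => x //.
Qed.

Lemma bb_not P : bb P -> bb (fun x => ~~ P x).
Proof.
move=> h; apply: (borel_ext (borelC h)) => x /=; split.
  by move=> /negP. by move=> /negP.
Qed.

Lemma bb_and P Q : bb P -> bb Q -> bb (fun x => P x && Q x).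
Proof.
move=> hP hQ; apply: (borel_ext (borelI hP hQ)) => x /=; split.
  by move=> /andP. by move=> [-> ->].
Qed.

Lemma bb_or P Q : bb P -> bb Q -> bb (fun x => P x || Q x).
Proof.
move=> hP hQ; apply: (borel_ext (borelU hP hQ)) => x /=; split.
  by move=> /orP. by move=> [->|->] //; rewrite orbT.
Qed.

Lemma bb_has (T : Type) (l : seq T) (P : T -> X -> bool) :
  (forall s, bb (P s)) -> bb (fun x => has (fun s => P s x) l).
Proof.
move=> h; elim: l => [|s l IH] /=; first exact: bb_const.
exact: bb_or.
Qed.

Lemma bb_all (T : Type) (l : seq T) (P : T -> X -> bool) :
  (forall s, bb (P s)) -> bb (fun x => all (fun s => P s x) l).
Proof.
move=> h; elim: l => [|s l IH] /=; first exact: bb_const.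
exact: bb_and.
Qed.

Lemma bm_const c : bm (fun _ => c).
Proof. by move=> m; apply: bb_const. Qed.

Lemma bm_find (T : Type) (l : seq T) (P : T -> X -> bool) :
  (forall s, bb (P s)) -> bm (fun x => find (fun s => P s x) l).
Proof.
move=> h; elim: l => [|s l IH] m /=; first exact: bb_const.
case: m => [|m].
  apply: (borel_ext (h s)) => x /=; by case: (P s x).
apply: (borel_ext (bb_and (bb_not (h s)) (IH m))) => x /=; by case: (P s x).
Qed.

Lemma bm_comp (h : X -> nat) (G : nat -> X -> nat) :
  bm h -> (forall e, bm (G e)) -> bm (fun x => G (h x) x).
Proof.
move=> bh bG m; rewrite /bb.
have H := @borel_bigcup (fun e => [set x | (h x == e) && (G e x == m)]) (fun e => bb_and (bh e) (bG e m)).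
apply: (borel_ext H) => x /=; split.
  by move=> hx; exists (h x) => //=; rewrite eqxx.
by case=> e _ /andP [/eqP <-].
Qed.

Lemma bb_comp (h : X -> nat) (Q : nat -> X -> bool) :
  bm h -> (forall e, bb (Q e)) -> bb (fun x => Q (h x) x).
Proof.
move=> bh bQ; rewrite /bb.
have H := @borel_bigcup (fun e => [set x | (h x == e) && Q e x]) (fun e => bb_and (bh e) (bQ e)).
apply: (borel_ext H) => x /=; split.
  by move=> hx; exists (h x) => //=; rewrite eqxx.
by case=> e _ /andP [/eqP <-].
Qed.

Lemma bm_ite (P : X -> bool) h1 h2 : bb P -> bm h1 -> bm h2 ->
  bm (fun x => if P x then h1 x else h2 x).
Proof.
move=> bP b1 b2 m.
apply: (borel_ext (bb_or (bb_and bP (b1 m)) (bb_and (bb_not bP) (b2 m)))) => x /=.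
by case: (P x) => /=; rewrite ?orbF.
Qed.

Lemma bb_pre (phi : X -> X) (P : X -> bool) : borel_fun phi -> bb P -> bb (fun x => P (phi x)).
Proof. by move=> bphi bP; exact: (bphi _ bP). Qed.

Lemma bm_pre (phi : X -> X) h : borel_fun phi -> bm h -> bm (fun x => h (phi x)).
Proof. by move=> bphi bh m; exact: (bb_pre bphi (bh m)). Qed.

End BorelClosure.
Lemma small_inv (e : Rdefinitions.R) : 0 < e -> exists k : nat, 0 < (k.+1%:R : Rdefinitions.R)^-1 /\ (k.+1%:R : Rdefinitions.R)^-1 < e / 2.
Proof.
move=> e0; set k := Num.Def.archi_bound (2 / e).
have h1 : 2 / e < k%:R by apply: archi_boundP; rewrite divr_ge0 // ltW.
exists k; split; first by rewrite invr_gt0 ltr0n.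
rewrite -[e / 2]invf_div ltf_pV2 ?posrE ?ltr0n ?divr_gt0 //.
apply: (lt_le_trans h1); rewrite ler_nat; exact: leqnSn.
Qed.
Section Markers.
Set Implicit Arguments. Unset Strict Implicit.
Variable X : topologicalType.
Variable a : Gamma -> X -> X.
Hypothesis a0 : forall x, a 0 x = x.
Hypothesis aD : forall g h x, a (g + h) x = a g (a h x).
Hypothesis ab : forall g, borel_fun (a g).
Hypothesis afree : free_action a.
Variable d : X -> X -> Rdefinitions.R.
Hypothesis dpos : forall x y, 0 <= d x y.
Hypothesis d0 : forall x y, d x y = 0 <-> x = y.
Hypothesis dsym : forall x y, d x y = d y x.
Hypothesis dtri : forall x y z, d x z <= d x y + d y z.
Hypothesis dopen : forall A : set X, open A <->
  forall x, A x -> exists e : Rdefinitions.R, 0 < e /\ [set y | d x y < e] `<=` A.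
Variable D : set X.
Hypothesis Ddense : closure D = setT.
Variable enc : X -> nat.
Hypothesis enc_inj : {in D &, injective enc}.
Variable W : nat.

Definition Bset (i k : nat) : set X :=
  [set y | exists p, [/\ D p, enc p = i & d p y < (k.+1%:R)^-1]].

Definition Ubas (n : nat) : set X :=
  match (unpickle n : option (nat * nat)) with Some (i, k) => Bset i k | None => set0 end.

Lemma ball_sub x r y : d x y < r -> exists e, 0 < e /\ [set z | d y z < e] `<=` [set z | d x z < r].
Proof.
move=> h; exists (r - d x y); split; first by rewrite subr_gt0.
move=> z /= hz; have := dtri x y z; lra.
Qed.

Lemma Bset_open i k : open (Bset i k).
Proof.
apply/dopen => y [p [Dp ep hp]].
have [e [e0 he]] := ball_sub hp; exists e; split => // z /he hz.
by exists p.
Qed.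

Lemma Ubas_open n : open (Ubas n).
Proof.
rewrite /Ubas; case: (unpickle n) => [[i k]|]; first exact: Bset_open.
exact: open0.
Qed.

Lemma basis (O : set X) x : open O -> O x -> exists n, Ubas n x /\ Ubas n `<=` O.
Proof.
move=> /dopen oO Ox; have [e [e0 he]] := oO x Ox.
have [k [r0 rlt]] := small_inv e0; set r := (k.+1%:R)^-1 in r0 rlt.
have xc : closure D x by rewrite Ddense.
have nb : nbhs x [set y | d x y < r].
  apply: open_nbhs_nbhs; split.
    apply/dopen => y hy; exact: ball_sub.
  by rewrite /= (proj2 (d0 x x) erefl).
have [p [Dp hp]] := xc _ nb.
exists (pickle (enc p, k)); rewrite /Ubas pickleK; split.
  by exists p; split => //; rewrite dsym.
move=> y [p' [Dp' ep' hp']].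
have pp : p' = p by apply: enc_inj; rewrite ?in_setE. 
subst p'; apply: he => /=.
move: hp hp'; rewrite /= -/r => hp hp'; have := dtri x p y; lra.
Qed.

Lemma Tone_open (q : X) : open [set y | y <> q].
Proof.
apply/dopen => y yq; exists (d y q); split.
  have := dpos y q; rewrite le_eqVlt => /orP [/eqP e|] //.
  by move: yq; rewrite (proj1 (d0 y q) (esym e)).
by move=> z /= hz zq; move: hz; rewrite zq ltxx.
Qed.

Fixpoint sepset (x : X) (l : seq Gamma) : set X :=
  match l with
  | [::] => setT
  | g :: l' => (if g == 0 then setT else [set y | y <> a g x]) `&` sepset x l'
  end.

Lemma sepsetP x l y : sepset x l y <-> (forall g, g \in l -> g != 0 -> y <> a g x).
Proof.
elim: l => [|g l IH] /=; first by split => // _ g.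
split.
  move=> [h1 /IH h2] g'; rewrite in_cons => /orP [/eqP ->|gl] g0; last exact: h2.
  by move: h1; rewrite (negbTE g0).
move=> h; split; last by apply/IH => g' gl; apply: h; rewrite in_cons gl orbT.
case: ifP => g0 //=; apply: h; [by rewrite in_cons eqxx | by rewrite g0].
Qed.

Lemma sepset_open x l : open (sepset x l).
Proof.
elim: l => [|g l IH] /=; first exact: openT.
apply: openI => //; case: ifP => _; [exact: openT | exact: Tone_open].
Qed.

Definition Fl : seq Gamma :=
  [seq ((e, (k%:Z - W%:Z)) : Gamma) | e <- [:: (0 : 'Z_2); 1], k <- iota 0 (W.*2.+1)].

Lemma Fl_mem (g : Gamma) : (`|g.2| <= W%:Z) -> g \in Fl.
Proof.
case: g => e z /= hz; apply/allpairsP.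
exists (e, absz (z + W%:Z)); split.
- by case: (Z2_cases e) => ->; rewrite !inE eqxx ?orbT.
- rewrite mem_iota add0n ltnS /=; move: hz; rewrite ler_norml => /andP [h1 h2]; lia.
- move: hz; rewrite ler_norml => /andP [h1 h2] /=; congr pair; lia.
Qed.

Lemma Fl_bound (g : Gamma) : g \in Fl -> `|g.2| <= W%:Z.
Proof.
move=> /allpairsP [[e k] [_ hk ->]].
move: hk; rewrite mem_iota add0n ltnS -mul2n /= => hk; rewrite ler_norml; apply/andP; split; lia.
Qed.

Lemma Fl_opp g : g \in Fl -> - g \in Fl.
Proof. by move=> /Fl_bound h; apply: Fl_mem; rewrite /= normrN. Qed.

Lemma aK g x : a (- g) (a g x) = x.
Proof. by rewrite -aD addNr a0. Qed.

Definition Vset (n : nat) : set X :=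
  [set x | Ubas n x /\ forall g, g \in Fl -> g != 0 -> ~ Ubas n (a g x)].

Lemma V_cover x : exists n, Vset n x.
Proof.
have Ox : sepset x Fl x.
  by apply/sepsetP => g _ g0 e; move/eqP: g0; apply; apply: (afree (esym e)).
have [n [Un sub]] := basis (sepset_open x Fl) Ox.
exists n; split => // g gF g0 /sub /sepsetP h.
exact: (h g gF g0).
Qed.

Fixpoint Iset (n : nat) : set X :=
  match n with
  | 0 => set0
  | n'.+1 => Iset n' `|` [set x | Vset n' x /\ forall g, g \in Fl -> g != 0 -> ~ Iset n' (a g x)]
  end.

Definition indep (A : set X) := forall x g, g \in Fl -> g != 0 -> A x -> A (a g x) -> False.

Lemma Iset_indep n : indep (Iset n).
Proof.
elim: n => [|n IH] x g gF g0 //=.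
have ng0 : - g != 0 by rewrite oppr_eq0.
case=> [Ix | [Vx Nx]] [Igx | [Vgx Ngx]].
- exact: (IH x g).
- by apply: (Ngx (- g) (Fl_opp gF) ng0); rewrite aK.
- exact: (Nx g gF g0).
- by case: Vx => _ h; apply: (h g gF g0); case: Vgx.
Qed.

Lemma Iset_mono n m : (n <= m)%N -> Iset n `<=` Iset m.
Proof.
elim: m => [|m IH]; first by rewrite leqn0 => /eqP ->.
rewrite leq_eqVlt => /orP [/eqP ->|]; first by [].
rewrite ltnS => /IH h x /h Ix /=; by left.
Qed.

Definition M0 : set X := \bigcup_n Iset n.

Lemma M0_indep : indep M0.
Proof.
move=> x g gF g0 [n _ In] [m _ Im].
apply: (@Iset_indep (maxn n m) x g gF g0).
  by apply: (Iset_mono (leq_maxl n m)).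
by apply: (Iset_mono (leq_maxr n m)).
Qed.

Lemma M0_max x : exists g : Gamma, `|g.2| <= W%:Z /\ M0 (a g x).
Proof.
have [n Vx] := V_cover x.
case: (pselect (forall g, g \in Fl -> g != 0 -> ~ Iset n (a g x))) => h.
  exists 0; split; first by rewrite normr0.
  by rewrite a0; exists n.+1 => //=; right; split.
have [g hg] : exists g, ~ (g \in Fl -> g != 0 -> ~ Iset n (a g x)).
  by apply/existsNP.
exists g; move: hg => /not_implyP [gF /not_implyP [g0 /contrapT Ig]].
by split; [exact: Fl_bound | exists n].
Qed.

Definition bigI (l : seq Gamma) (A : Gamma -> set X) : set X :=
  [set x | forall g, g \in l -> A g x].

Lemma borel_bigI l A : (forall g, borel (A g)) -> borel (bigI l A).
Proof.
move=> h; elim: l => [|g l IH].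
  by apply: (borel_ext (@borelT X)) => x; split => // _ g.
apply: (borel_ext (borelI (h g) IH)) => x /=; split.
  by move=> H; split => [|g' gl]; apply: H; rewrite in_cons ?eqxx ?gl ?orbT.
by move=> [H1 H2] g'; rewrite in_cons => /orP [/eqP ->|/H2].
Qed.

Lemma Iset_borel n : borel (Iset n).
Proof.
elim: n => [|n IH] /=; first exact: borel0.
apply: borelU => //.
have bU := borel_open (Ubas_open n).
have H1 : borel (bigI Fl (fun g => [set x | g != 0 -> ~ Ubas n (a g x)])).
  apply: borel_bigI => g; case: (eqVneq g 0) => [->|g0].
    by apply: (borel_ext (@borelT X)) => x; split => // _.
  by apply: (borel_ext (borelC (ab g bU))) => x; split => h; [apply: h | move=> _; exact: h].
have H2 : borel (bigI Fl (fun g => [set x | g != 0 -> ~ Iset n (a g x)])).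
  apply: borel_bigI => g; case: (eqVneq g 0) => [->|g0].
    by apply: (borel_ext (@borelT X)) => x; split => // _.
  by apply: (borel_ext (borelC (ab g IH))) => x; split => h; [apply: h | move=> _; exact: h].
apply: (borel_ext (borelI (borelI bU H1) H2)) => x.
by split; case=> [[h1 h2] h3].
Qed.

Definition Mk : set X := M0 `|` (a tt0 @^-1` M0).

Lemma tt0_tt0 : tt0 + tt0 = 0.
Proof. by apply/eqP. Qed.

Lemma Mk_borel : borel Mk.
Proof.
have b0 : borel M0 by apply: borel_bigcup => n; exact: Iset_borel.
by apply: borelU => //; apply: ab.
Qed.

Lemma Mk_t y : Mk (a tt0 y) <-> Mk y.
Proof.
rewrite /Mk /= -aD tt0_tt0 a0; split; by case; [right|left].
Qed.

Lemma Mk_dense x : exists g : Gamma, `|g.2| <= W%:Z /\ Mk (a g x).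
Proof. by have [g [h1 h2]] := M0_max x; exists g; split => //; left. Qed.

Lemma Mk_sparse y (g : Gamma) : Mk y -> Mk (a g y) -> `|g.2| <= W%:Z -> g.2 = 0.
Proof.
have key : forall (e1 e2 : Gamma), e1.2 = 0 -> e2.2 = 0 -> M0 (a e1 y) -> M0 (a e2 (a g y)) ->
    `|g.2| <= W%:Z -> g.2 = 0.
  move=> e1 e2 h1 h2 M1 M2 gW.
  set h := e2 + g - e1.
  have ah : a h (a e1 y) = a e2 (a g y) by rewrite /h -!aD; congr a; rewrite addrNK.
  have h2' : h.2 = g.2 by rewrite /h /= h1 h2 add0r subr0.
  case: (eqVneq h 0) => [h0|hn0].
    by rewrite -h2' h0.
  exfalso; apply: (M0_indep (x := a e1 y) (g := h)) => //.
    by apply: Fl_mem; rewrite h2'.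
  by rewrite ah.
move=> [My|My] [Mg|Mg] gW.
- by apply: (key 0 0) => //; rewrite a0.
- by apply: (key 0 tt0) => //; rewrite a0.
- by apply: (key tt0 0) => //; rewrite a0.
- by apply: (key tt0 tt0).
Qed.

End Markers.
Section Assemble.
Set Implicit Arguments. Unset Strict Implicit.
Variable X : topologicalType.
Variable a : Gamma -> X -> X.
Hypothesis a0 : forall x, a 0 x = x.
Hypothesis aD : forall g h x, a (g + h) x = a g (a h x).
Hypothesis ab : forall g, borel_fun (a g).
Variable M : set X.
Hypothesis Mb : borel M.
Hypothesis Mt : forall y, M (a tt0 y) <-> M y.

Definition mu (x : X) (z : int) : bool := `[< M (a ((0 : 'Z_2)%R, z) x) >].

Lemma M_lvl (e : 'Z_2) (w : int) y : M (a (e, w) y) <-> M (a ((0 : 'Z_2)%R, w) y).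
Proof.
case: (Z2_cases e) => ->; first by [].
have -> : (((1 : 'Z_2)%R, w) : Gamma) = tt0 + ((0 : 'Z_2)%R, w).
  by apply: injective_projections => /=; rewrite ?add0r ?addr0.
by rewrite aD Mt.
Qed.

Lemma mu_shift g x : mu (a g x) = shiftf g.2 (mu x).
Proof.
apply: funext => z; rewrite /mu /shiftf -aD.
apply/asbool_equiv_eq; case: g => e w /=.
rewrite (_ : ((0 : 'Z_2)%R, z) + (e, w) = (e, z + w)); last first.
  by apply: injective_projections => /=; rewrite ?add0r.
exact: M_lvl.
Qed.

Lemma bb_mu z : bb (fun x => mu x z).
Proof.
apply: (borel_ext (ab ((0 : 'Z_2)%R, z) Mb)) => x /=; rewrite /mu asboolE; by [].
Qed.

Variable S : seq Gamma.

Lemma bb_Dp p z : bb (fun x => Dp S p (mu x) z).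
Proof. by apply: (@bb_has _ _ _ (fun s x => mu x _)) => s; apply: bb_mu. Qed.

Lemma bm_kk p : bm (fun x => kk S p (mu x)).
Proof. by apply: (@bm_find _ _ _ (fun k x => Dp S p (mu x) _)) => k; apply: bb_Dp. Qed.

Lemma bm_colp p : bm (fun x => colp S p (mu x)).
Proof.
rewrite /colp; apply: bm_ite; first exact: bb_Dp.
  exact: bm_const.
apply: bm_ite; last exact: bm_const.
  by apply: (@bb_comp _ (fun x => kk S p (mu x)) (fun e _ => odd e)) => [|e]; [exact: bm_kk | exact: bb_const].
exact: bm_const.
Qed.

Lemma bm_colp_shift p (w : int) : bm (fun x => colp S p (shiftf w (mu x))).
Proof.
have -> : (fun x => colp S p (shiftf w (mu x))) = (fun x => colp S p (mu (a ((0 : 'Z_2)%R, w) x))).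
  by apply: funext => x; rewrite mu_shift.
apply: (@bm_pre _ (a ((0 : 'Z_2)%R, w)) (fun x => colp S p (mu x))) => //.
exact: bm_colp.
Qed.

Definition rungG e f : nat :=
  if [&& (e < WW S)%N, 0 < lvl S (e %/ (2 * PP S))%N & ((e %% (2 * PP S))%N < 2 * nn S (e %/ (2 * PP S))%N)%N] then
    other S (e %/ (2 * PP S))%N (if ((e %% (2 * PP S))%N < nn S (e %/ (2 * PP S))%N)%N then colp S (e %/ (2 * PP S))%N (shiftf (- (nn S (e %/ (2 * PP S))%N)%:Z) f) else colp S (e %/ (2 * PP S))%N f)
  else i0 S.

Lemma rungE f : rung S f = rungG (wrung S f) f.
Proof. by []. Qed.

Lemma bm_rung : bm (fun x => rung S (mu x)).
Proof.
have -> : (fun x => rung S (mu x)) = (fun x => rungG (wrung S (mu x)) (mu x)).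
  by apply: funext => x; rewrite rungE.
apply: (@bm_comp _ (fun x => wrung S (mu x)) (fun e x => rungG e (mu x))).
  by apply: (@bm_find _ _ _ (fun s x => mu x _)) => s; apply: bb_mu.
move=> e; rewrite /rungG.
apply: bm_ite; [exact: bb_const | | exact: bm_const].
apply: (@bm_comp _ (fun x => if ((e %% (2 * PP S))%N < nn S (e %/ (2 * PP S))%N)%N
      then colp S (e %/ (2 * PP S))%N (shiftf (- (nn S (e %/ (2 * PP S))%N)%:Z) (mu x)) else colp S (e %/ (2 * PP S))%N (mu x)) (fun c _ => other S (e %/ (2 * PP S))%N c)).
  by apply: bm_ite; [exact: bb_const | exact: bm_colp_shift | exact: bm_colp].
move=> c; exact: bm_const.
Qed.

Lemma bm_Col i : bm (fun x => Col S i (mu x)).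
Proof.
rewrite /Col; apply: bm_ite; first exact: bb_const.
  by apply: bm_ite; [exact: bb_const | exact: bm_rung | exact: bm_const].
by apply: bm_ite; [exact: bb_const | exact: bm_colp | exact: bm_colp_shift].
Qed.

End Assemble.
Theorem lemma11 (X : topologicalType) (a : Gamma -> X -> X) (S : seq Gamma) :
  standard_borel X -> (exists x : X, True) ->
  borel_action a -> free_action a ->
  symmetric_mset S -> (0 : Gamma) \notin S -> generates S ->
  ((1 : 'Z_2)%R, (0 : int)) \in S ->
  borel_chromatic_index_eq a S (size S).
Proof.
move=> pol [x0 _] [a0 aD ab] afree symS S0 _ tS.
have tS' : tt0 \in S by [].
split; last first.
  move=> k [c [c1 c2 c3 c4]].
  have U : uniq (map (c x0) (iota 0 (size S))).
    rewrite map_inj_in_uniq ?iota_uniq // => i j; rewrite !mem_iota !add0n => /andP [_ iS] /andP [_ jS] e.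
    by case: (eqVneq i j) => // /eqP nij; exfalso; exact: (c3 x0 i j iS jS nij e).
  have sub : {subset map (c x0) (iota 0 (size S)) <= iota 0 k}.
    move=> y /mapP [i]; rewrite mem_iota add0n => /andP [_ iS] ->.
    by rewrite mem_iota add0n c1.
  by have := uniq_leq_size U sub; rewrite size_map !size_iota.
case: pol => [[D [Dc Dd]] [d [[dpos d0] dsym dtri dopen _]]].
have [enc encI] := countable_injP _ Dc.
set W := WW S.
set M := Mk a d D enc W.
have Mt : forall y, M (a tt0 y) <-> M y by move=> y; apply: Mk_t.
have Mb : borel M by apply: Mk_borel.
exists (fun x i => Col S i (mu a M x)); split.
- by move=> x i iS; apply: Col_lt.
- move=> x i iS; rewrite (mu_shift aD Mt); exact: Col_partner.
- move=> x i j iS jS nij; apply/eqP; apply: Col_inj => //; last exact/eqP.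
  + move=> u v fu fv h; rewrite /mu asboolE in fu; rewrite /mu asboolE in fv.
    have := @Mk_sparse X a a0 aD d D enc W (a ((0 : 'Z_2)%R, u) x) ((0 : 'Z_2)%R, v - u) fu.
    rewrite -aD (_ : ((0 : 'Z_2)%R, v - u) + ((0 : 'Z_2)%R, u) = ((0 : 'Z_2)%R, v)); last first.
      by apply: injective_projections => /=; rewrite ?addr0 ?subrK.
    move=> /(_ fv) /=; rewrite -normrN opprB => /(_ h) /eqP; rewrite subr_eq0 => /eqP ->.
    by [].
  + move=> z; have [g [gW Mg]] := @Mk_dense X a a0 afree d dpos d0 dsym dtri dopen D Dd enc encI W (a ((0 : 'Z_2)%R, z) x).
    exists (z + g.2); split; first by rewrite opprD addrA subrr sub0r normrN.
    rewrite /mu asboolE -(M_lvl aD Mt g.1).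
    have -> : ((g.1, z + g.2) : Gamma) = g + ((0 : 'Z_2)%R, z).
      by apply: injective_projections => /=; rewrite ?addr0 // addrC.
    by rewrite aD.
- move=> i m iS.
  apply: (borel_ext (@bm_Col X a aD ab M Mb Mt S i m)) => x /=; split.
    by move=> ->; rewrite eqxx.
  by move=> /eqP.
Qed.
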